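(* Let $\Gamma$ be a graph and let $s\neq t$ be vertices of $\Gamma$. Then the subgroups $S_5(s)$ and $S_5(t)$ are not conjugate in $G(C_\Gamma)$.
   Context: Let $\Gamma$ be a graph with vertex set $S$ and symmetric adjacency relation (loops, if present, are ignored; ''adjacent'' refers to distinct vertices). $G(C_\Gamma)$ is the group with generators $s_1,s_2,s_3,s_4$ for each $s\in S$ and exactly the following relations: every generator is an involution; for each $s\in S$, $(s_is_{i+1})^3=e$ for $i=1,2,3$ and $(s_is_j)^2=e$ for $|i-j|\ge2$; for all distinct $s,t\in S$, $(s_4t_4)^2=e$; for all distinct adjacent $s,t\in S$, $(s_1t_1)^2=(s_1t_3)^2=(s_3t_1)^2=(s_3t_3)^2=e$. For $s\in S$, $S_5(s)=\langle s_1,s_2,s_3,s_4\rangle\le G(C_\Gamma)$ (isomorphic to $S_5$). *)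

(* Defs.v *)
(* The group G(C_Gamma) is realised as the quotient of the
   free monoid on the generators s_i (s : S, i = 1..4) by the congruence
   generated by the relators r = e.  Since every generator is an
   involution (relator [g;g]), this monoid quotient is exactly the group
   given by the presentation; the inverse of the class of a word w is the
   class of (rev w). *)
From Stdlib Require Import List.
Import ListNotations.

Inductive idx := I1 | I2 | I3 | I4.

Definition gen (S : Type) := (S * idx)%type.

Definition pw2 {A} (a b : A) : list A := [a; b; a; b].
Definition pw3 {A} (a b : A) : list A := [a; b; a; b; a; b].

Inductive relator {S : Type} (adj : S -> S -> Prop) : list (gen S) -> Prop :=
  | rel_inv   : forall (s : S) (i : idx), relator adj [(s, i); (s, i)]
  | rel_12    : forall s, relator adj (pw3 (s, I1) (s, I2))
  | rel_23    : forall s, relator adj (pw3 (s, I2) (s, I3))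
  | rel_34    : forall s, relator adj (pw3 (s, I3) (s, I4))
  | rel_13    : forall s, relator adj (pw2 (s, I1) (s, I3))
  | rel_14    : forall s, relator adj (pw2 (s, I1) (s, I4))
  | rel_24    : forall s, relator adj (pw2 (s, I2) (s, I4))
  | rel_44    : forall s t, s <> t -> relator adj (pw2 (s, I4) (t, I4))
  | rel_11    : forall s t, s <> t -> adj s t -> relator adj (pw2 (s, I1) (t, I1))
  | rel_13'   : forall s t, s <> t -> adj s t -> relator adj (pw2 (s, I1) (t, I3))
  | rel_31    : forall s t, s <> t -> adj s t -> relator adj (pw2 (s, I3) (t, I1))
  | rel_33    : forall s t, s <> t -> adj s t -> relator adj (pw2 (s, I3) (t, I3)).

Inductive geq {S : Type} (adj : S -> S -> Prop) : list (gen S) -> list (gen S) -> Prop :=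
  | geq_refl  : forall w, geq adj w w
  | geq_sym   : forall u v, geq adj u v -> geq adj v u
  | geq_trans : forall u v w, geq adj u v -> geq adj v w -> geq adj u w
  | geq_rel   : forall u r v, relator adj r -> geq adj (u ++ r ++ v) (u ++ v).

Definition in_S5 {S : Type} (adj : S -> S -> Prop) (s : S) (x : list (gen S)) : Prop :=
  exists w : list (gen S), Forall (fun g => fst g = s) w /\ geq adj x w.

Definition S5_conjugate {S : Type} (adj : S -> S -> Prop) (s t : S) : Prop :=
  exists g : list (gen S),
    forall x : list (gen S),
      in_S5 adj t x <-> exists y, in_S5 adj s y /\ geq adj x (g ++ y ++ rev g).

(* Main.v *)
Require Import Defs.
From Stdlib Require Import List Bool ClassicalDescription.
Import ListNotations.

Section P.
Variable S : Type.
Variable s : S.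
Definition fs (g : gen S) : bool :=
  if excluded_middle_informative (fst g = s) then true else false.
Definition par (w : list (gen S)) : bool :=
  fold_right (fun a b => xorb (fs a) b) false w.
Lemma par_app u v : par (u ++ v) = xorb (par u) (par v).
Proof. induction u; simpl; auto. rewrite IHu, xorb_assoc; auto. Qed.
Lemma par_rev u : par (rev u) = par u.
Proof. induction u; simpl; auto. rewrite par_app, IHu; simpl.
  destruct (fs a), (par u); auto. Qed.
Lemma par_rel adj r : relator adj r -> par r = false.
Proof. intros H; destruct H; unfold par; simpl;
  unfold fs; simpl;
  repeat match goal with |- context [excluded_middle_informative ?P] =>
    destruct (excluded_middle_informative P) end; simpl; try reflexivity; congruence. Qed.
Lemma par_geq adj u v : geq adj u v -> par u = par v.
Proof. intros H; induction H; auto; try congruence.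
  rewrite !par_app. rewrite (par_rel adj r) by auto. destruct (par u), (par v); reflexivity. Qed.
End P.

Theorem lemma4p16 (S : Type) (adj : S -> S -> Prop)
  (adj_sym : forall s t, adj s t -> adj t s)
  (s t : S) (hst : s <> t) :
  ~ S5_conjugate adj s t.
Proof.
  intros [g Hg].
  destruct (proj2 (Hg (g ++ [(s, I1)] ++ rev g))) as [w [Hw Hx]].
  { exists [(s, I1)]. split; [|apply geq_refl].
    exists [(s, I1)]. split; [repeat constructor | apply geq_refl]. }
  apply (par_geq S s) in Hx.
  rewrite !par_app, par_rev in Hx.
  assert (Hw0 : par S s w = false).
  { clear Hx Hg. induction Hw; simpl; auto. rewrite IHHw. unfold fs.
    destruct (excluded_middle_informative (fst x = s)). all: try (exfalso; congruence); try reflexivity. }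
  rewrite Hw0 in Hx. unfold par at 2 in Hx. simpl in Hx. unfold fs in Hx. simpl in Hx.
  destruct (excluded_middle_informative (s = s)); [|congruence].
  destruct (par S s g); discriminate.
Qed.
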